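(* Let $\Omega\subset\mathbb R^d$ be compact with nonempty interior. Then the set of restrictions to $\Omega$ of the maps $$\mathbf x\mapsto \mathbf W^T\,\mathrm{ReLU}(\mathbf W\mathbf x-\mathbf b),\qquad p\in\mathbb N,\ \mathbf W\in\mathbb R^{p\times d},\ \mathbf b\in\mathbb R^p,$$ (with $\mathrm{ReLU}(t)=\max(t,0)$ applied componentwise) is not dense in $\mathcal E(\Omega)$ with respect to the norm $\|\mathbf f\|_{C(\Omega)}=\sup_{\mathbf x\in\Omega}\|\mathbf f(\mathbf x)\|$.
   Context: $C^{0,1}_{\uparrow}(\mathbb R)$ denotes the set of Lipschitz-continuous increasing functions $\mathbb R\to\mathbb R$. $\mathcal E(\mathbb R^d)$ is the set of maps $\mathbf x\mapsto\mathbf W^T\boldsymbol\sigma(\mathbf W\mathbf x)$ with $p\in\mathbb N$, $\mathbf W\in\mathbb R^{p\times d}$, and $\boldsymbol\sigma$ acting componentwise as $(\boldsymbol\sigma(\mathbf z))_i=\sigma_i(z_i)$ with each $\sigma_i\in C^{0,1}_{\uparrow}(\mathbb R)$; $\mathcal E(\Omega)$ is the set of restrictions to $\Omega$ of elements of $\mathcal E(\mathbb R^d)$. *)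

(* Defs.v *)
From HB Require Import structures.
From mathcomp Require Import all_boot all_order all_algebra.
From mathcomp Require Import all_classical all_reals all_analysis.
Set Implicit Arguments. Unset Strict Implicit. Unset Printing Implicit Defensive.
Import Order.TTheory GRing.Theory Num.Theory.
Import numFieldNormedType.Exports.
Local Open Scope ring_scope.
Local Open Scope classical_set_scope.

Definition enorm (R : realType) (d : nat) (v : 'cV[R]_d) : R :=
  Num.sqrt (\sum_(i < d) v i 0 ^+ 2).

Definition lip_incr (R : realType) (s : R -> R) : Prop :=
  (exists L : R, forall x y, `|s x - s y| <= L * `|x - y|) /\
  (forall x y, x <= y -> s x <= s y).

Definition cw_apply (R : realType) (p : nat) (sigma : 'I_p -> R -> R)
  (z : 'cV[R]_p) : 'cV[R]_p := \col_i sigma i (z i 0).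

Definition E_map (R : realType) (d : nat) (f : 'cV[R]_d -> 'cV[R]_d) : Prop :=
  exists (p : nat) (W : 'M[R]_(p, d)) (sigma : 'I_p -> R -> R),
    (forall i, lip_incr (sigma i)) /\
    f = fun x => W^T *m cw_apply sigma (W *m x).

Definition relu (R : realType) (t : R) : R := Num.max t 0.

Definition relu_map (R : realType) (d : nat) (g : 'cV[R]_d -> 'cV[R]_d) : Prop :=
  exists (p : nat) (W : 'M[R]_(p, d)) (b : 'cV[R]_p),
    g = fun x => W^T *m (\col_i relu ((W *m x - b) i 0)).

(* Main.v *)
Require Import Defs.
From HB Require Import structures.
From mathcomp Require Import all_boot all_order all_algebra.
From mathcomp Require Import all_classical all_reals all_analysis.
From mathcomp Require Import ring lra.
Import Order.TTheory GRing.Theory Num.Theory.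
Import numFieldNormedType.Exports.
Local Open Scope ring_scope.
Local Open Scope classical_set_scope.

Lemma near_line (R : realType) d (Omega : set 'cV[R]_d) (x0 e0 : 'cV[R]_d) :
  nbhs x0 Omega -> exists2 e : R, 0 < e & forall t : R, `|t| < e -> Omega (x0 + t *: e0).
Proof.
move=> H.
have C : (fun t : R => x0 + t *: e0) @ 0 --> x0 + 0 *: e0.
  apply: cvgD; first exact: cvg_cst.
  exact: (@scalel_continuous _ _ e0 0).
rewrite scale0r addr0 in C.
have := C _ H => /nbhs_normP [e /= e0p He].
exists e => // t Ht; apply: He => /=. by rewrite sub0r normrN.
Qed.

Lemma keyp (R : realType) (c s : R) : 0 <= s ->
  2 * Num.max (c + 2 * s) 0 - 2 * Num.max (c + s) 0 - Num.max (c + 3 * s) 0 + Num.max c 0 <= 0.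
Proof.
move=> hs.
case: (leP (c + 2 * s) 0) => h2; case: (leP (c + s) 0) => h1;
case: (leP (c + 3*s) 0) => h3; case: (leP c 0) => h0;
rewrite ?(max_l (ltW _)) ?(max_r _) //; try lra.
all: try (rewrite (max_l (ltW _)) //; lra).
Qed.

Lemma keyn (R : realType) (c s : R) : s <= 0 ->
  0 <= 2 * Num.max (c + 2 * s) 0 - 2 * Num.max (c + s) 0 - Num.max (c + 3 * s) 0 + Num.max c 0.
Proof.
move=> hs.
case: (leP (c + 2 * s) 0) => h2; case: (leP (c + s) 0) => h1;
case: (leP (c + 3*s) 0) => h3; case: (leP c 0) => h0;
rewrite ?(max_l (ltW _)) ?(max_r _) //; try lra.
all: try (rewrite (max_l (ltW _)) //; lra).
Qed.

Lemma key2 (R : realType) (a c t : R) : 0 <= t ->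
  2 * (a * relu (c + 2 * t * a)) - 2 * (a * relu (c + t * a))
  - a * relu (c + 3 * t * a) + a * relu (c + 0 * a) <= 0.
Proof.
move=> ht; rewrite /relu mul0r addr0.
have E : forall j : R, c + j * t * a = c + j * (t * a) by move=> j; rewrite mulrA.
rewrite !E.
have -> : c + t * a = c + 1 * (t * a) by rewrite mul1r.
set M := (X in X <= 0).
have -> : M = a * (2 * Num.max (c + 2 * (t * a)) 0 - 2 * Num.max (c + 1 * (t * a)) 0
   - Num.max (c + 3 * (t * a)) 0 + Num.max c 0) by rewrite /M; ring.
rewrite mul1r.
case: (leP 0 a) => ha.
  rewrite mulr_ge0_le0 //; apply: keyp; exact: mulr_ge0.
rewrite mulr_le0_ge0 ?(ltW ha) //; apply: keyn.
by rewrite mulr_ge0_le0 // ltW.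
Qed.

Lemma enorm_ge (R : realType) d (v : 'cV[R]_d) k : `|v k 0| <= enorm v.
Proof.
rewrite /enorm -sqrtr_sqr ler_sqrt; last by apply: sumr_ge0 => i _; exact: sqr_ge0.
rewrite (bigD1 k) //= lerDl; apply: sumr_ge0 => i _; exact: sqr_ge0.
Qed.

Theorem proposition3 (R : realType) (d : nat) (Omega : set 'cV[R]_d) :
  (0 < d)%N ->
  compact Omega ->
  Omega° !=set0 ->
  ~ (forall f : 'cV[R]_d -> 'cV[R]_d, E_map f ->
       forall eps : R, 0 < eps ->
         exists g : 'cV[R]_d -> 'cV[R]_d, relu_map g /\
           (forall x, Omega x -> enorm (f x - g x) <= eps)).
Proof.
move=> hd _ [x0 Hx0] H.
pose k : 'I_d := Ordinal hd.
pose e0 : 'cV[R]_d := delta_mx k 0.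
have [e ep He] := @near_line R d Omega x0 e0 Hx0.
pose del := e / 4.
have delp : 0 < del by rewrite /del divr_gt0.
have dE : e = del * 4 by rewrite /del mulrAC -mulrA divff ?mulr1.
pose a := x0 k 0 + del.
pose sig := fun t : R => if t <= a then 0 else if t <= a + del then t - a else del.
pose W : 'M[R]_(1, d) := delta_mx 0 k.
pose f := fun x : 'cV[R]_d => W^T *m cw_apply (fun _ => sig) (W *m x).
have fE : forall x, f x k 0 = sig (x k 0).
  move=> x; rewrite /f mxE big_ord1 /cw_apply !mxE eqxx /= mul1r.
  congr sig; rewrite (bigD1 k) //= big1 ?addr0; first by rewrite !mxE !eqxx mul1r.
  by move=> l hl; rewrite !mxE (negbTE hl) andbF mul0r.
have Ef : E_map f.
  exists 1%N, W, (fun _ => sig); split => // i; split.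
    exists 1 => x y; rewrite mul1r /sig.
    have h1 := ler_norm (x - y).
    have h2 : -(x-y) <= `|x-y| by rewrite -normrN ler_norm.
    rewrite ler_norml; case: (leP x a)=>?; case: (leP x (a+del))=>?;
    case:(leP y a)=>?; case:(leP y (a+del))=>?; apply/andP; split; lra.
  move=> x y xy; rewrite /sig.
  case: (leP x a)=>?; case: (leP x (a+del))=>?;
  case:(leP y a)=>?; case:(leP y (a+del))=>?; lra.
have eps8 : 0 < del / 8 by rewrite divr_gt0.
have [g [[p [W' [b gE]]] Hg]] := H f Ef _ eps8.
pose c := fun i => (W' *m x0 - b) i 0.
pose Gs := fun s : R => \sum_i W' i k * relu (c i + s * W' i k).
have gX : forall s, g (x0 + s *: e0) k 0 = Gs s.
  move=> s; rewrite gE mulmxDr -scalemxAr /e0 -colE mxE; apply: eq_bigr => i _.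
  rewrite !mxE /c !mxE.
  congr (_ * relu _); lra.
have fX : forall s, f (x0 + s *: e0) k 0 = sig (x0 k 0 + s).
  by move=> s; rewrite fE !mxE eqxx mulr1.
have B : forall j : R, 0 <= j <= 3 -> `|sig (x0 k 0 + j * del) - Gs (j * del)| <= del / 8.
  move=> j /andP [j0 j3]; rewrite -fX -gX.
  have hX : Omega (x0 + (j * del) *: e0).
    apply: He; rewrite ger0_norm; last by rewrite mulr_ge0 // ltW.
    have : j * del <= 3 * del by rewrite ler_wpM2r // ltW.
    lra.
  apply: le_trans (Hg _ hX).
  by have := @enorm_ge R d (f (x0 + (j * del) *: e0) - g (x0 + (j * del) *: e0)) k; rewrite !mxE.
have K : 2 * Gs (2 * del) - 2 * Gs (1 * del) - Gs (3 * del) + Gs (0 * del) <= 0.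
  rewrite /Gs !mulr_sumr -!sumrB -big_split /=.
  apply: sumr_le0 => i _.
  rewrite mul1r mul0r; exact: (@key2 R (W' i k) (c i) del (ltW delp)).
have B0 := B 0 ltac:(apply/andP; split; lra).
have B1 := B 1 ltac:(apply/andP; split; lra).
have B2 := B 2 ltac:(apply/andP; split; lra).
have B3 := B 3 ltac:(apply/andP; split; lra).
have nle : forall u v : R, v < u -> (u <= v) = false.
  by move=> u v h; apply/negbTE; rewrite -ltNge.
have S0 : sig (x0 k 0 + 0 * del) = 0 by rewrite /sig /a ifT //; lra.
have S1 : sig (x0 k 0 + 1 * del) = 0 by rewrite /sig /a ifT //; lra.
have S2 : sig (x0 k 0 + 2 * del) = del.
  by rewrite /sig /a nle ?ifT; [lra|lra|lra].
have S3 : sig (x0 k 0 + 3 * del) = del.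
  by rewrite /sig /a !nle; lra.
move: B0 B1 B2 B3; rewrite S0 S1 S2 S3 !ler_norml.
move=> /andP[? ?] /andP[? ?] /andP[? ?] /andP[? ?].
lra.
Qed.
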